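(* Consider Algorithm ProxSAGA (described in the context) with $b=1$, $\eta=1/(5Ln)$, run for $T\ge1$ iterations. Then the output $x_a$ satisfies $$\mathbb E\big[\|\mathcal G_\eta(x_a)\|^2\big]\le \frac{50Ln^2}{5n-2}\cdot\frac{F(x^0)-F(x^* )}{T},$$ where $x^*$ is an optimal solution of $\min_x F(x)$.
   Context: Setting: Let $n,d\ge 1$ be integers and $[n]=\{1,\dots,n\}$. Let $f_1,\dots,f_n:\mathbb R^d\to\mathbb R$ be differentiable (possibly nonconvex) functions, each $L$-smooth for some $L>0$, i.e. $\|\nabla f_i(x)-\nabla f_i(y)\|\le L\|x-y\|$ for all $x,y\in\mathbb R^d$ and $i\in[n]$. Let $f=\frac1n\sum_{i=1}^n f_i$. Let $h:\mathbb R^d\to\mathbb R\cup\{+\infty\}$ be proper, lower semicontinuous and convex, with closed domain. Let $F=f+h$, and let $x^*$ be a global minimizer of $F$ on $\mathbb R^d$ (assumed to exist). For $\eta>0$, $\mathrm{prox}_{\eta h}(x):=\arg\min_{y\in\mathbb R^d}\big(h(y)+\frac1{2\eta}\|y-x\|^2\big)$, and the gradient mapping is $\mathcal G_\eta(x):=\frac1\eta\big[x-\mathrm{prox}_{\eta h}(x-\eta\nabla f(x))\big]$. Algorithm ProxSAGA$(x^0,T,b,\eta)$: Given $x^0\in\mathbb R^d$, positive integers $T,b$ and $\eta>0$, set $\alpha^0_i=x^0$ for all $i\in[n]$. For $t=0,1,\dots$ let $g^t=\frac1n\sum_{i=1}^n\nabla f_i(\alpha^t_i)$. For $t=0,\dots,T-1$: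 draw two multisets $I_t,J_t$, each consisting of $b$ indices drawn independently and uniformly at random from $[n]$ (with replacement; $I_t$, $J_t$ independent of each other and of all previous draws); set $v^t=\frac1b\sum_{i\in I_t}\big(\nabla f_i(x^t)-\nabla f_i(\alpha^t_i)\big)+g^t$ and $x^{t+1}=\mathrm{prox}_{\eta h}(x^t-\eta v^t)$; set $\alpha^{t+1}_j=x^t$ for $j\in J_t$ and $\alpha^{t+1}_j=\alpha^t_j$ for $j\notin J_t$. The output $x_a$ is chosen uniformly at random from $\{x^0,\dots,x^{T-1}\}$. Expectations are over all randomness of the algorithm. *)

(* Defs.v *)
From Stdlib Require Import Reals.
From mathcomp Require Import all_boot.
Set Implicit Arguments. Unset Strict Implicit. Unset Printing Implicit Defensive.

Local Open Scope R_scope.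

Definition vec (d : nat) := 'I_d -> R.

Definition rsum (I : finType) (F : I -> R) : R := \big[Rplus/0]_(i : I) F i.

Definition vadd d (x y : vec d) : vec d := fun i => x i + y i.
Definition vsub d (x y : vec d) : vec d := fun i => x i - y i.
Definition vscale d (a : R) (x : vec d) : vec d := fun i => a * x i.
Definition dot d (x y : vec d) : R := rsum (fun i : 'I_d => x i * y i).
Definition norm d (x : vec d) : R := sqrt (dot x x).

Definition vavg n d (v : 'I_n -> vec d) : vec d :=
  fun k => / INR n * rsum (fun i : 'I_n => v i k).

Definition is_gradient d (f : vec d -> R) (g : vec d -> vec d) : Prop :=
  forall x eps, 0 < eps -> exists delta, 0 < delta /\
    forall hv, norm hv < delta ->
      Rabs (f (vadd x hv) - f x - dot (g x) hv) <= eps * norm hv.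

Definition lipschitz_grad d (L : R) (g : vec d -> vec d) : Prop :=
  forall x y, norm (vsub (g x) (g y)) <= L * norm (vsub x y).

(* extended-real-valued h : None encodes +infinity *)
Definition ereal_gt (a : R) (v : option R) : Prop :=
  match v with None => True | Some w => a < w end.

Definition proper_fun d (h : vec d -> option R) : Prop :=
  exists x a, h x = Some a.

Definition convex_fun d (h : vec d -> option R) : Prop :=
  forall x y a b lam, 0 <= lam <= 1 -> h x = Some a -> h y = Some b ->
    exists c, h (vadd (vscale lam x) (vscale (1 - lam) y)) = Some c /\
              c <= lam * a + (1 - lam) * b.

Definition lsc_fun d (h : vec d -> option R) : Prop :=
  forall x a, ereal_gt a (h x) ->
    exists delta, 0 < delta /\
      forall y, norm (vsub y x) < delta -> ereal_gt a (h y).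

Definition closed_dom d (h : vec d -> option R) : Prop :=
  forall x, h x = None -> exists delta, 0 < delta /\
      forall y, norm (vsub y x) < delta -> h y = None.

Definition is_prox d (eta : R) (h : vec d -> option R) (x p : vec d) : Prop :=
  exists hp, h p = Some hp /\
    forall y hy, h y = Some hy ->
      hp + / (2 * eta) * (norm (vsub p x))^2 <= hy + / (2 * eta) * (norm (vsub y x))^2.

Definition favg n d (fs : 'I_n -> vec d -> R) (x : vec d) : R :=
  / INR n * rsum (fun i : 'I_n => fs i x).
Definition gradf n d (gs : 'I_n -> vec d -> vec d) (x : vec d) : vec d :=
  vavg (fun i => gs i x).

Definition grad_map n d (gs : 'I_n -> vec d -> vec d) (prox : vec d -> vec d)
  (eta : R) (x : vec d) : vec d :=
  vscale (/ eta) (vsub x (prox (vsub x (vscale eta (gradf gs x))))).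

(* ProxSAGA with b = 1: state (x^t, alpha^t); one step uses I_t = {i}, J_t = {j} *)
Definition saga_state n d := (vec d * ('I_n -> vec d))%type.

Definition saga_step n d (gs : 'I_n -> vec d -> vec d) (prox : vec d -> vec d)
  (eta : R) (st : saga_state n d) (ij : 'I_n * 'I_n) : saga_state n d :=
  let (x, alpha) := st in
  let (i, j) := ij in
  let g := vavg (fun k => gs k (alpha k)) in
  let v := vadd (vsub (gs i x) (gs i (alpha i))) g in
  (prox (vsub x (vscale eta v)),
   fun k => if k == j then x else alpha k).

(* sample space: the draws (I_t, J_t), t < T, uniformly distributed *)
Definition outcome (n T : nat) := {ffun 'I_T -> 'I_n * 'I_n}.

Definition saga_iter n d T (gs : 'I_n -> vec d -> vec d) (prox : vec d -> vec d)
  (eta : R) (x0 : vec d) (omega : outcome n T) (t : nat) : vec d :=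
  fst (foldl (saga_step gs prox eta) (x0, fun _ => x0)
             (take t [seq omega s | s <- enum 'I_T])).

(* E ||G_eta(x_a)||^2, x_a uniform on {x^0,...,x^{T-1}}, independent of the draws *)
Definition expected_gm_sq n d (gs : 'I_n -> vec d -> vec d)
  (prox : vec d -> vec d) (eta : R) (x0 : vec d) (T : nat) : R :=
  / INR T * rsum (fun t : 'I_T =>
     / INR #|{: outcome n T}| *
       rsum (fun omega : outcome n T =>
         (norm (grad_map gs prox eta (saga_iter gs prox eta x0 omega t)))^2)).

(* Main.v *)
Require Import Defs.
From Stdlib Require Import Reals.
From mathcomp Require Import all_boot.
Local Open Scope R_scope.
From Stdlib Require Import Lra Lia Psatz FunctionalExtensionality.
From HB Require Import structures.

Lemma Rplus_assoc' : associative Rplus. Proof. move=> a b c; ring. Qed.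
HB.instance Definition _ := Monoid.isComLaw.Build R 0 Rplus Rplus_assoc' Rplus_comm Rplus_0_l.

Lemma rsum_ext (I : finType) (F G : I -> R) : (forall i, F i = G i) -> rsum F = rsum G.
Proof. move=> H; apply: eq_bigr => i _; exact: H. Qed.

Lemma rsum_add (I : finType) (F G : I -> R) : rsum (fun i => F i + G i) = rsum F + rsum G.
Proof. exact: big_split. Qed.

Lemma rsum_scal (I : finType) (a : R) (F : I -> R) : rsum (fun i => a * F i) = a * rsum F.
Proof.
rewrite /rsum; elim/big_rec2: _ => [|i x y _ ->]; first by rewrite Rmult_0_r.
by rewrite Rmult_plus_distr_l.
Qed.

Lemma rsum_le (I : finType) (F G : I -> R) : (forall i, F i <= G i) -> rsum F <= rsum G.
Proof.
move=> H; rewrite /rsum; elim/big_rec2: _ => [|i x y _ Hxy]; first lra.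
have := H i; lra.
Qed.

Lemma rsum_ge0 (I : finType) (F : I -> R) : (forall i, 0 <= F i) -> 0 <= rsum F.
Proof.
move=> H; have -> : 0 = rsum (fun _ : I => 0).
  rewrite /rsum big1 //.
exact: rsum_le.
Qed.

Lemma rsum_const (I : finType) (a : R) : rsum (fun _ : I => a) = INR #|I| * a.
Proof.
rewrite /rsum big_const; elim: #|I| => [|m IH]; first by rewrite /=; lra.
rewrite iterS IH -addn1 plus_INR /=; lra.
Qed.

Lemma rsum_opp (I : finType) (F : I -> R) : rsum (fun i => - F i) = - rsum F.
Proof. have H := @rsum_scal I (-1) F.
have -> : rsum (fun i => - F i) = rsum (fun i => -1 * F i) by apply: rsum_ext => i; lra.
lra. Qed.

Lemma rsum_sub (I : finType) (F G : I -> R) : rsum (fun i => F i - G i) = rsum F - rsum G.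
Proof.
have -> : rsum (fun i => F i - G i) = rsum (fun i => F i + - G i) by apply: rsum_ext.
rewrite rsum_add rsum_opp; lra.
Qed.

Lemma rsum_exchange (I J : finType) (F : I -> J -> R) :
  rsum (fun i => rsum (fun j => F i j)) = rsum (fun j => rsum (fun i => F i j)).
Proof. exact: exchange_big. Qed.

Lemma rsum_pair (I J : finType) (F : I * J -> R) :
  rsum F = rsum (fun i => rsum (fun j => F (i, j))).
Proof. rewrite /rsum pair_bigA; apply: eq_bigr => -[i j] _ //. Qed.

Lemma rsum_pred1 (I : finType) (k : I) (F : I -> R) :
  rsum (fun j => if j == k then F j else 0) = F k.
Proof.
rewrite /rsum (bigD1 k) //= eqxx big1 ?Rplus_0_r // => j /negbTE -> //.
Qed.

Lemma dot_ge0 d (u : vec d) : 0 <= dot u u.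
Proof. apply: rsum_ge0 => i; nra. Qed.

Lemma norm_sq d (u : vec d) : (norm u)^2 = dot u u.
Proof. rewrite /norm /= Rmult_1_r sqrt_sqrt //; exact: dot_ge0. Qed.

Lemma norm_ge0 d (u : vec d) : 0 <= norm u.
Proof. exact: sqrt_pos. Qed.

Lemma small_lam (A B : R) : 0 <= B -> (forall lam, 0 < lam <= 1 -> A <= lam * B) -> A <= 0.
Proof.
move=> HB H; apply: Rnot_lt_le => HA.
have Hs : 0 < A + B + 1 by lra.
have Hi : 0 < / (A + B + 1) by apply: Rinv_0_lt_compat.
have Hii : / (A + B + 1) * (A + B + 1) = 1 by apply: Rinv_l; lra.
have Hl : 0 < A * / (A + B + 1) <= 1 by split; nra.
have := H _ Hl. nra.
Qed.

Lemma prox_strong d (eta : R) (h : vec d -> option R) (x p y : vec d) hp hy :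
  0 < eta -> convex_fun h -> is_prox eta h x p -> h p = Some hp -> h y = Some hy ->
  hp + / (2 * eta) * dot (vsub p x) (vsub p x) + / (2 * eta) * dot (vsub y p) (vsub y p)
  <= hy + / (2 * eta) * dot (vsub y x) (vsub y x).
Proof.
move=> Heta Hconv [hp' [Hp' Hmin]] Hp Hy.
rewrite Hp in Hp'; case: Hp' => Heq; subst hp'.
set k := / (2 * eta).
have Hk : 0 < k by apply: Rinv_0_lt_compat; lra.
set Dp := dot (vsub p x) (vsub y p).
have Hid : dot (vsub y x) (vsub y x) =
   dot (vsub y p) (vsub y p) + 2 * Dp + dot (vsub p x) (vsub p x).
  rewrite /Dp /dot -rsum_scal -!rsum_add; apply: rsum_ext => i; rewrite /vsub; ring.
have Hmain : hp - hy - 2 * k * Dp <= 0.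
  apply: (@small_lam _ (k * dot (vsub y p) (vsub y p))).
    apply: Rmult_le_pos; [lra | exact: dot_ge0].
  move=> lam Hlam.
  have [c [Hc Hcle]] := Hconv y p hy hp lam ltac:(lra) Hy Hp.
  have := Hmin _ _ Hc.
  rewrite norm_sq norm_sq.
  have -> : dot (vsub (vadd (vscale lam y) (vscale (1 - lam) p)) x)
                (vsub (vadd (vscale lam y) (vscale (1 - lam) p)) x)
      = dot (vsub p x) (vsub p x) + 2 * lam * Dp + lam^2 * dot (vsub y p) (vsub y p).
    rewrite /Dp /dot -!rsum_scal -!rsum_add; apply: rsum_ext => i;
    rewrite /vsub /vadd /vscale; ring.
  move=> H1.
  have H2 : lam * (hp - hy - 2 * k * Dp) <= lam * (lam * (k * dot (vsub y p) (vsub y p))).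
    rewrite /k in H1 *; nra.
  apply: (Rmult_le_reg_l lam); lra.
rewrite Hid; rewrite /k in Hmain *; nra.
Qed.

Lemma young d (a b : vec d) (beta : R) : 0 < beta ->
  dot a b <= / (2 * beta) * dot a a + beta / 2 * dot b b.
Proof.
move=> Hb; rewrite /dot -!rsum_scal -rsum_add; apply: rsum_le => i.
have Hi : / (2 * beta) * (2 * beta) = 1 by apply: Rinv_l; lra.
have Hp : 0 < / (2 * beta) by apply: Rinv_0_lt_compat; lra.
have H0 : 0 <= / (2 * beta) * (a i - beta * b i) ^ 2 by apply: Rmult_le_pos; [lra|apply: pow2_ge_0].
have -> : / (2 * beta) * (a i * a i) + beta / 2 * (b i * b i)
   = a i * b i + / (2 * beta) * (a i - beta * b i) ^ 2.
  field; lra.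
lra.
Qed.

Lemma norm_scale d (s : R) (u : vec d) : norm (vscale s u) = Rabs s * norm u.
Proof.
rewrite /norm.
have -> : dot (vscale s u) (vscale s u) = Rsqr s * dot u u.
  rewrite /dot -rsum_scal; apply: rsum_ext => i; rewrite /vscale /Rsqr; ring.
rewrite sqrt_mult_alt ?sqrt_Rsqr_abs //; exact: Rle_0_sqr.
Qed.

Section Descent.
Variables (d : nat) (f : vec d -> R) (g : vec d -> vec d) (L : R).
Hypothesis Hg : is_gradient f g.
Hypothesis HL : lipschitz_grad L g.
Hypothesis HL0 : 0 < L.

Variables (x y : vec d).
Let hv := vsub y x.
Let line (t : R) : vec d := fun k => x k + t * hv k.
Let phi (t : R) := f (line t).

Lemma deriv_phi t : derivable_pt_lim phi t (dot (g (line t)) hv).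
Proof.
move=> eps Heps.
set N := norm hv.
have HN : 0 <= N := @norm_ge0 d hv.
have He' : 0 < eps / (2 * (N + 1)) by apply: Rdiv_lt_0_compat; lra.
have [delta [Hd Hdel]] := Hg (line t) _ He'.
have Hd' : 0 < delta / (N + 1) by apply: Rdiv_lt_0_compat; lra.
exists (mkposreal _ Hd') => s Hs0 Hs /=.
have Hnorm : norm (vscale s hv) < delta.
  rewrite norm_scale; rewrite /= in Hs.
  have : Rabs s * (N + 1) < delta.
    have Hi : / (N + 1) * (N + 1) = 1 by apply: Rinv_l; lra.
    rewrite /Rdiv in Hs. nra.
  rewrite -/N; have := Rabs_pos s. nra.
have := Hdel _ Hnorm.
have -> : vadd (line t) (vscale s hv) = line (t + s).
  apply: functional_extensionality => k; rewrite /vadd /line /vscale; ring.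
have -> : dot (g (line t)) (vscale s hv) = s * dot (g (line t)) hv.
  rewrite /dot -rsum_scal; apply: rsum_ext => k; rewrite /vscale; ring.
rewrite norm_scale -/N => H.
have -> : (phi (t + s) - phi t) / s - dot (g (line t)) hv
    = (f (line (t + s)) - f (line t) - s * dot (g (line t)) hv) / s.
  rewrite /phi; field; exact: Hs0.
rewrite /Rdiv Rabs_mult Rabs_inv.
have Hsp : 0 < Rabs s by apply: Rabs_pos_lt.
have Hsi : / Rabs s * Rabs s = 1 by apply: Rinv_l; lra.
have Hsip : 0 < / Rabs s by apply: Rinv_0_lt_compat.
suff : Rabs (f (line (t + s)) - f (line t) - s * dot (g (line t)) hv) < eps * Rabs s by nra.
have : eps / (2 * (N + 1)) * (Rabs s * N) < eps * Rabs s.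
  have -> : eps / (2 * (N + 1)) * (Rabs s * N) = eps * Rabs s * (N / (2 * (N + 1))).
    field; lra.
  have : N / (2 * (N + 1)) < 1.
    have Hi : / (2 * (N + 1)) * (2 * (N + 1)) = 1 by apply: Rinv_l; lra.
    have : 0 < / (2 * (N + 1)) by apply: Rinv_0_lt_compat; lra.
    rewrite /Rdiv; nra.
  have : 0 < eps * Rabs s by nra.
  nra.
lra.
Qed.

Lemma descent_lemma :
  f y <= f x + dot (g x) hv + L / 2 * dot hv hv.
Proof.
set A := dot (g x) hv.
set C := L / 2 * dot hv hv.
pose psi t := phi t - (A * t + C * (t * t)).
have Hpoly : forall t, derivable_pt_lim (fun t => A * t + C * (t * t)) t
                                        (A * 1 + C * (1 * t + t * 1)).
  move=> t.
  exact: (derivable_pt_lim_plus _ _ _ _ _ (derivable_pt_lim_scal _ _ _ _ (derivable_pt_lim_id t))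
     (derivable_pt_lim_scal _ _ _ _ (derivable_pt_lim_mult _ _ _ _ _ (derivable_pt_lim_id t)
        (derivable_pt_lim_id t)))).
have Hpsi : forall t, 0 <= t <= 1 -> derivable_pt_lim psi t
    (dot (g (line t)) hv - (A * 1 + C * (1 * t + t * 1))).
  move=> t _; exact: (derivable_pt_lim_minus _ _ _ _ _ (deriv_phi t) (Hpoly t)).
have [c [Hc Hc01]] := MVT_cor2 psi _ 0 1 Rlt_0_1 Hpsi.
have Hneg : dot (g (line c)) hv - (A * 1 + C * (1 * c + c * 1)) <= 0.
  set a := vsub (g (line c)) (g x).
  have Ha : dot (g (line c)) hv - A = dot a hv.
    rewrite /A /a /dot -rsum_sub; apply: rsum_ext => k; rewrite /vsub; ring.
  have Hy := @young d a hv (L * c) ltac:(nra).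
  have Hlin : vsub (line c) x = vscale c hv.
    apply: functional_extensionality => k; rewrite /vsub /line /vscale; ring.
  have Hq : dot a a <= (L * c) ^ 2 * dot hv hv.
    rewrite -!norm_sq.
    have H1 := HL (line c) x. rewrite -/a Hlin norm_scale Rabs_right in H1; last lra.
    have := @norm_ge0 d a. have := @norm_ge0 d hv.
    have -> : (L * c) ^ 2 * norm hv ^ 2 = (L * (c * norm hv))^2 by ring.
    move=> ? ?; apply: pow_incr; lra.
  have Hi : / (2 * (L * c)) * (L * c) = / 2.
    field; split; lra.
  have Hp : 0 < / (2 * (L * c)) by apply: Rinv_0_lt_compat; nra.
  have : / (2 * (L * c)) * dot a a <= / (2 * (L * c)) * ((L * c) ^ 2 * dot hv hv).
    exact: Rmult_le_compat_l (Rlt_le _ _ Hp) Hq.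
  have -> : / (2 * (L * c)) * ((L * c) ^ 2 * dot hv hv) = (L * c) / 2 * dot hv hv.
    field; split; lra.
  rewrite /C; lra.
have Hpsi1 : psi 1 <= psi 0 by nra.
have E1 : line 1 = y.
  apply: functional_extensionality => k; rewrite /line /hv /vsub; ring.
have E0 : line 0 = x.
  apply: functional_extensionality => k; rewrite /line; ring.
move: Hpsi1; rewrite /psi /phi E1 E0 /C; lra.
Qed.

End Descent.

Lemma rsum_zero (I : finType) : rsum (fun _ : I => 0) = 0.
Proof. by rewrite /rsum big1. Qed.

Lemma rsum_le0 (I : finType) (F : I -> R) : (forall i, F i <= 0) -> rsum F <= 0.
Proof. move=> H; rewrite -(rsum_zero I); exact: rsum_le. Qed.

Lemma coord_ineq (eta x y z v u : R) : 0 < eta ->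
  / (2 * eta) * ((z - (x - eta * v)) * (z - (x - eta * v)))
  - / (2 * eta) * ((y - (x - eta * v)) * (y - (x - eta * v)))
  - / (2 * eta) * ((z - y) * (z - y))
  + / (2 * eta) * ((x - (x - eta * u)) * (x - (x - eta * u)))
  - / (2 * eta) * ((z - (x - eta * u)) * (z - (x - eta * u)))
  - / (2 * eta) * ((x - z) * (x - z))
  + u * (y - x)
  - eta / 2 * ((v - u) * (v - u))
  + / (2 * eta) * ((z - x) * (z - x))
  + / (2 * eta) * ((y - x) * (y - x)) <= 0.
Proof.
move=> He.
have -> : / (2 * eta) * ((z - (x - eta * v)) * (z - (x - eta * v)))
  - / (2 * eta) * ((y - (x - eta * v)) * (y - (x - eta * v)))
  - / (2 * eta) * ((z - y) * (z - y))
  + / (2 * eta) * ((x - (x - eta * u)) * (x - (x - eta * u)))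
  - / (2 * eta) * ((z - (x - eta * u)) * (z - (x - eta * u)))
  - / (2 * eta) * ((x - z) * (x - z))
  + u * (y - x)
  - eta / 2 * ((v - u) * (v - u))
  + / (2 * eta) * ((z - x) * (z - x))
  + / (2 * eta) * ((y - x) * (y - x))
  = - (/ (2 * eta) * ((z - y - eta * (v - u)) * (z - y - eta * (v - u)))).
  field; lra.
have : 0 < / (2 * eta) by apply: Rinv_0_lt_compat; lra.
have := Rle_0_sqr (z - y - eta * (v - u)); rewrite /Rsqr => H1 H2.
have := Rmult_le_pos _ _ (Rlt_le _ _ H2) H1. lra.
Qed.

Lemma arith_i (N L Fvy Fvx V A G2 S Sy k eta : R) : 1 <= N -> 0 < L -> k = 5 * L * N / 2 ->
  0 <= A -> 0 <= S ->
  Sy <= N * ((1 + (2 * N - 1)) * A) + (1 + / (2 * N - 1)) * S ->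
  Fvy <= Fvx + eta / 2 * V - k * G2 - (k - L / 2) * A ->
  N * Fvy + L / 5 * (/ N * ((N - 1) * Sy + N * A))
  <= N * Fvx + N * (eta / 2 * V) - N * (k * G2) + L / 5 * (2 * (N - 1) / (2 * N - 1)) * S.
Proof.
move=> HN HL Hk HA HS H2 H3.
have HNi : / N * N = 1 by apply: Rinv_l; lra.
have HNp : 0 < / N by apply: Rinv_0_lt_compat; lra.
have H3' : N * Fvy <= N * (Fvx + eta / 2 * V - k * G2 - (k - L / 2) * A).
  apply: Rmult_le_compat_l; lra.
have Hc : 0 <= L / 5 * / N * (N - 1) by apply: Rmult_le_pos; [apply: Rmult_le_pos|]; lra.
have H2' := Rmult_le_compat_l _ _ _ Hc H2.
have E1 : L / 5 * (/ N * ((N - 1) * Sy + N * A)) = L / 5 * / N * (N - 1) * Sy + L / 5 * A.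
  field; lra.
have E2 : L / 5 * / N * (N - 1) * (N * ((1 + (2 * N - 1)) * A) + (1 + / (2 * N - 1)) * S)
   = L / 5 * (N - 1) * (2 * N) * A + L / 5 * (2 * (N - 1) / (2 * N - 1)) * S.
  field; lra.
rewrite E1; rewrite E2 in H2'.
have Hcoef : N * (k - L / 2) * A >= L / 5 * (N - 1) * (2 * N) * A + L / 5 * A.
  rewrite Hk.
  have : N * (5 * L * N / 2 - L / 2) - (L / 5 * (N - 1) * (2 * N) + L / 5) >= 0.
    have -> : N * (5 * L * N / 2 - L / 2) - (L / 5 * (N - 1) * (2 * N) + L / 5)
       = L / 10 * (21 * N * N - N - 2) by field.
    apply: Rle_ge; apply: Rmult_le_pos; nra.
  nra.
have E3 : N * (Fvx + eta / 2 * V - k * G2 - (k - L / 2) * A)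
  = N * Fvx + N * (eta / 2 * V) - N * (k * G2) - N * (k - L / 2) * A by ring.
lra.
Qed.

Lemma arith_final (N L eta Fvx G2 S k SumV : R) : 1 <= N -> 0 < L -> eta = / (5 * L * N) ->
  0 <= S -> SumV <= L ^ 2 * S ->
  / (N * N) * (N * N * Fvx + N * (eta / 2) * SumV - N * N * (k * G2)
               + N * (L / 5 * (2 * (N - 1) / (2 * N - 1)) * S))
  <= Fvx + L / 5 * (/ N * S) - k * G2.
Proof.
move=> HN HL He HS HV.
have E : / (N * N) * (N * N * Fvx + N * (eta / 2) * SumV - N * N * (k * G2)
               + N * (L / 5 * (2 * (N - 1) / (2 * N - 1)) * S))
   = Fvx - k * G2 + / N * (eta / 2) * SumV + / N * (L / 5 * (2 * (N - 1) / (2 * N - 1))) * S.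
  field; lra.
rewrite E.
have HNp : 0 < / N by apply: Rinv_0_lt_compat; lra.
have H1 : / N * (eta / 2) * SumV <= / N * (eta / 2) * (L ^ 2 * S).
  apply: Rmult_le_compat_l => //. rewrite He.
  have : 0 < / (5 * L * N) by apply: Rinv_0_lt_compat; nra.
  nra.
have E2 : / N * (eta / 2) * (L ^ 2 * S) + / N * (L / 5 * (2 * (N - 1) / (2 * N - 1))) * S
   = L / 5 * (/ N * S) - L / 5 * (/ N * S) * (/ (2 * N * (2 * N - 1))).
  rewrite He; field; lra.
have : 0 <= L / 5 * (/ N * S) * (/ (2 * N * (2 * N - 1))).
  apply: Rmult_le_pos; [apply: Rmult_le_pos; [lra|apply: Rmult_le_pos; lra]|]. apply: Rlt_le; apply: Rinv_0_lt_compat; nra.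
lra.
Qed.

Definition hval d (h : vec d -> option R) (x : vec d) : R :=
  match h x with Some a => a | None => 0 end.

Arguments hval {d}.
Arguments prox_strong {d eta h x p y hp hy}.

Section Step.
Variables (n d : nat) (L : R) (fs : 'I_n -> vec d -> R) (gs : 'I_n -> vec d -> vec d)
  (h : vec d -> option R) (prox : vec d -> vec d) (eta : R).
Hypothesis Hn : (1 <= n)%N.
Hypothesis HL : 0 < L.
Hypothesis Hgrad : forall i, is_gradient (fs i) (gs i).
Hypothesis Hlip : forall i, lipschitz_grad L (gs i).
Hypothesis Hconv : convex_fun h.
Hypothesis Heta : 0 < eta.
Hypothesis Hprox : forall x, is_prox eta h x (prox x).

Lemma INRn_pos : 0 < INR n.
Proof. apply: lt_0_INR; apply/ltP; exact: Hn. Qed.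

Lemma dot_vavg (u : 'I_n -> vec d) (w : vec d) :
  dot (vavg u) w = / INR n * rsum (fun i => dot (u i) w).
Proof.
rewrite /dot /vavg (@rsum_exchange _ _ (fun i k => u i k * w k)) -rsum_scal.
apply: rsum_ext => k.
have -> : rsum (fun i => u i k * w k) = rsum (fun i => w k * u i k) by apply: rsum_ext => i; ring.
rewrite rsum_scal Rmult_assoc; congr (_ * _); exact: Rmult_comm.
Qed.

Lemma favg_descent (x y : vec d) :
  favg fs y <= favg fs x + dot (gradf gs x) (vsub y x)
               + L / 2 * dot (vsub y x) (vsub y x).
Proof.
rewrite /gradf dot_vavg /favg.
have Hn0 := INRn_pos.
have Hi : 0 < / INR n by apply: Rinv_0_lt_compat.
have H : rsum (fun i => fs i y) <= rsum (fun i => fs i x + dot (gs i x) (vsub y x)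
               + L / 2 * dot (vsub y x) (vsub y x)).
  apply: rsum_le => i; exact: descent_lemma.
rewrite !rsum_add rsum_const in H.
have Hc : / INR n * (INR #|'I_n| * (L / 2 * dot (vsub y x) (vsub y x)))
          = L / 2 * dot (vsub y x) (vsub y x).
  rewrite card_ord; field; lra.
have H0 := Rmult_le_compat_l _ _ _ (Rlt_le _ _ Hi) H.
rewrite !Rmult_plus_distr_l Hc in H0; exact: H0.
Qed.

Lemma prox_dom x : exists a, h (prox x) = Some a.
Proof. by have [hp [Hp _]] := Hprox x; exists hp. Qed.

Definition Fv x := favg fs x + hval h x.

Lemma step_ineq (x v : vec d) hx : h x = Some hx ->
  let u := gradf gs x in
  let y := prox (vsub x (vscale eta v)) in
  let z := prox (vsub x (vscale eta u)) in
  Fv y <= Fv x + eta / 2 * dot (vsub v u) (vsub v u)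
          - / (2 * eta) * dot (vsub z x) (vsub z x)
          - (/ (2 * eta) - L / 2) * dot (vsub y x) (vsub y x).
Proof.
move=> Hx u y z.
have [hy Hy] := prox_dom (vsub x (vscale eta v)).
have [hz Hz] := prox_dom (vsub x (vscale eta u)).
have H1 := prox_strong Heta Hconv (Hprox (vsub x (vscale eta v))) Hy Hz.
have H2 := prox_strong Heta Hconv (Hprox (vsub x (vscale eta u))) Hz Hx.
have H3 := favg_descent x y.
rewrite /Fv /hval -/y -/z Hx Hy; rewrite -/y -/z in H1 H2.
suff : / (2 * eta) * dot (vsub z (vsub x (vscale eta v))) (vsub z (vsub x (vscale eta v)))
  - / (2 * eta) * dot (vsub y (vsub x (vscale eta v))) (vsub y (vsub x (vscale eta v)))
  - / (2 * eta) * dot (vsub z y) (vsub z y)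
  + / (2 * eta) * dot (vsub x (vsub x (vscale eta u))) (vsub x (vsub x (vscale eta u)))
  - / (2 * eta) * dot (vsub z (vsub x (vscale eta u))) (vsub z (vsub x (vscale eta u)))
  - / (2 * eta) * dot (vsub x z) (vsub x z)
  + dot u (vsub y x)
  - eta / 2 * dot (vsub v u) (vsub v u)
  + / (2 * eta) * dot (vsub z x) (vsub z x)
  + / (2 * eta) * dot (vsub y x) (vsub y x) <= 0.
  rewrite -/u in H3; lra.
rewrite /dot -!rsum_scal; repeat (rewrite -rsum_sub || rewrite -rsum_add).
apply: rsum_le0 => k.
rewrite /vsub /vscale; exact: coord_ineq.
Qed.


Definition Q (u : vec d) := dot u u.

Lemma Q_ge0 u : 0 <= Q u.
Proof. exact: dot_ge0. Qed.

Lemma lip_Q i (x y : vec d) : Q (vsub (gs i x) (gs i y)) <= L^2 * Q (vsub x y).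
Proof.
rewrite /Q -!norm_sq.
have H := Hlip i x y.
have := @norm_ge0 d (vsub (gs i x) (gs i y)).
have -> : L ^ 2 * norm (vsub x y) ^ 2 = (L * norm (vsub x y))^2 by ring.
move=> ?; apply: pow_incr; lra.
Qed.

Lemma var_bound (a : 'I_n -> vec d) :
  rsum (fun i => Q (fun k => a i k - vavg a k)) <= rsum (fun i => Q (a i)).
Proof.
rewrite /Q /dot (@rsum_exchange _ _ (fun i k => (a i k - vavg a k) * (a i k - vavg a k))).
rewrite (@rsum_exchange _ _ (fun i k => a i k * a i k)).
apply: rsum_le => k.
set m := vavg a k.
have Hm : rsum (fun i => a i k) = INR n * m.
  rewrite /m /vavg -Rmult_assoc Rinv_r ?Rmult_1_l //.
  have := INRn_pos; lra.
have -> : rsum (fun i => (a i k - m) * (a i k - m))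
   = rsum (fun i => a i k * a i k) + (-2 * m) * rsum (fun i => a i k) + rsum (fun _ : 'I_n => m * m).
  rewrite -rsum_scal -!rsum_add; apply: rsum_ext => i; ring.
rewrite rsum_const card_ord Hm.
have : 0 <= INR n * (m * m) by apply: Rmult_le_pos; [apply: pos_INR|apply: Rle_0_sqr].
lra.
Qed.

Lemma Q_split (beta : R) (y x a : vec d) : 0 < beta ->
  Q (vsub y a) <= (1 + beta) * Q (vsub y x) + (1 + / beta) * Q (vsub x a).
Proof.
move=> Hb; rewrite /Q /dot -!rsum_scal -rsum_add; apply: rsum_le => k.
rewrite /vsub.
have Hi : / beta * beta = 1 by apply: Rinv_l; lra.
have Hp : 0 < / beta by apply: Rinv_0_lt_compat.
have H0 := Rle_0_sqr (beta * (y k - x k) - (x k - a k)); rewrite /Rsqr in H0.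
have -> : (1 + beta) * ((y k - x k) * (y k - x k)) + (1 + / beta) * ((x k - a k) * (x k - a k))
  = (y k - a k) * (y k - a k) + / beta * ((beta * (y k - x k) - (x k - a k)) * (beta * (y k - x k) - (x k - a k))).
  field; lra.
have := Rmult_le_pos _ _ (Rlt_le _ _ Hp) H0. lra.
Qed.

Lemma sum_j (y x : vec d) (al : 'I_n -> vec d) :
  rsum (fun j : 'I_n => rsum (fun k => Q (vsub y (if k == j then x else al k))))
  = (INR n - 1) * rsum (fun k => Q (vsub y (al k))) + INR n * Q (vsub y x).
Proof.
rewrite (@rsum_exchange _ _ (fun j k => Q (vsub y (if k == j then x else al k)))).
have E : forall k : 'I_n, rsum (fun j : 'I_n => Q (vsub y (if k == j then x else al k)))
   = INR n * Q (vsub y (al k)) + (Q (vsub y x) - Q (vsub y (al k))).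
  move=> k.
  have -> : rsum (fun j : 'I_n => Q (vsub y (if k == j then x else al k)))
     = rsum (fun j : 'I_n => Q (vsub y (al k)) + (if j == k then Q (vsub y x) - Q (vsub y (al k)) else 0)).
    apply: rsum_ext => j; rewrite eq_sym; case: eqP => _; ring.
  by rewrite rsum_add rsum_const card_ord rsum_pred1.
rewrite (@rsum_ext _ _ _ E) !rsum_add rsum_opp rsum_const card_ord rsum_scal.
set S := rsum (fun k : 'I_n => Q (vsub y (al k))).
ring.
Qed.

Hypothesis Heta_def : eta = / (5 * L * INR n).

Definition Phi (st : saga_state n d) :=
  Fv st.1 + L / 5 * (/ INR n * rsum (fun k => Q (vsub st.1 (st.2 k)))).

Lemma INRn_ge1 : 1 <= INR n.
Proof. have := le_INR 1 n; rewrite /=; apply; apply/leP; exact: Hn. Qed.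

Lemma one_step x al hx : h x = Some hx ->
  / INR #|{: 'I_n * 'I_n}| * rsum (fun ij => Phi (saga_step gs prox eta (x, al) ij))
  <= Phi (x, al) - eta / 2 * (norm (grad_map gs prox eta x))^2.
Proof.
move=> Hx.
have HN := INRn_ge1.
set N := INR n in HN *.
set u := gradf gs x.
set z := prox (vsub x (vscale eta u)).
set a := fun i => vsub (gs i x) (gs i (al i)).
set v := fun i => vadd (vsub (gs i x) (gs i (al i))) (vavg (fun k => gs k (al k))).
set y := fun i => prox (vsub x (vscale eta (v i))).
set S := rsum (fun k => Q (vsub x (al k))).
set G2 := Q (vsub z x).
set k := / (2 * eta).
have Hk : k = 5 * L * N / 2.
  rewrite /k Heta_def -/N; field; split; lra.
have HS : 0 <= S by apply: rsum_ge0 => i; exact: Q_ge0.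
have Hnorm : (norm (grad_map gs prox eta x))^2 = / eta ^ 2 * G2.
  rewrite norm_sq /grad_map /G2 /Q /dot -rsum_scal; apply: rsum_ext => i.
  rewrite /vscale /vsub -/u -/z; field; lra.
have Hei : eta / 2 * (/ eta ^ 2 * G2) = k * G2.
  rewrite /k; field; lra.
rewrite Hnorm Hei.
rewrite rsum_pair card_prod card_ord mult_INR -/N.
have Bi : forall i, rsum (fun j => Phi (saga_step gs prox eta (x, al) (i, j)))
   <= N * Fv x + N * (eta / 2 * Q (vsub (v i) u)) - N * (k * G2)
      + L / 5 * (2 * (N - 1) / (2 * N - 1)) * S.
  move=> i.
  have E : rsum (fun j => Phi (saga_step gs prox eta (x, al) (i, j)))
     = N * Fv (y i) + L / 5 * (/ N * ((N - 1) * rsum (fun k => Q (vsub (y i) (al k)))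
                                      + N * Q (vsub (y i) x))).
    have -> : rsum (fun j => Phi (saga_step gs prox eta (x, al) (i, j)))
      = rsum (fun j => Fv (y i) + L / 5 * (/ N * rsum (fun k => Q (vsub (y i) (if k == j then x else al k))))).
      by apply: rsum_ext => j.
    by rewrite rsum_add rsum_const card_ord rsum_scal rsum_scal sum_j.
  rewrite E.
  have HA : 0 <= Q (vsub (y i) x) := Q_ge0 _.
  have T2 : rsum (fun k => Q (vsub (y i) (al k)))
      <= N * ((1 + (2 * N - 1)) * Q (vsub (y i) x)) + (1 + / (2 * N - 1)) * S.
    have H := @rsum_le _ _ (fun k => (1 + (2 * N - 1)) * Q (vsub (y i) x)
                 + (1 + / (2 * N - 1)) * Q (vsub x (al k)))
      (fun k => @Q_split (2 * N - 1) (y i) x (al k) ltac:(lra)).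
    rewrite rsum_add rsum_const card_ord rsum_scal in H; exact: H.
  have T3 := @step_ineq x (v i) hx Hx.
  rewrite -/u -/z -/(y i) -/k in T3.
  cbv zeta in T3. exact: (arith_i _ _ _ _ _ _ _ _ _ _ _ HN HL Hk HA HS T2 T3).
have HsumV : rsum (fun i => Q (vsub (v i) u)) <= L ^ 2 * S.
  have -> : rsum (fun i => Q (vsub (v i) u)) = rsum (fun i => Q (fun c => a i c - vavg a c)).
    apply: rsum_ext => i; congr Q; apply: functional_extensionality => c.
    rewrite /vsub /v /vadd /u /gradf /vavg /a /vsub.
    rewrite (@rsum_sub _ (fun i0 => gs i0 x c) (fun i0 => gs i0 (al i0) c)).
    set A1 := rsum (fun i0 : 'I_n => gs i0 x c). set A2 := rsum (fun i0 : 'I_n => gs i0 (al i0) c). ring.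
  apply: Rle_trans (var_bound a) _.
  rewrite /S -rsum_scal; apply: rsum_le => i; exact: lip_Q.
have Hsum := @rsum_le _ _ _ Bi.
rewrite rsum_add rsum_sub rsum_add !rsum_const card_ord rsum_scal rsum_scal -/N in Hsum.
have HNN : 0 <= / (N * N) by apply: Rlt_le; apply: Rinv_0_lt_compat; nra.
apply: Rle_trans (Rmult_le_compat_l _ _ _ HNN Hsum) _.
set SV := rsum (fun i : 'I_n => Q (vsub (v i) u)) in HsumV *.
have He' : eta = / (5 * L * N) by rewrite Heta_def.
have := arith_final _ _ _ (Fv x) G2 _ k _ HN HL He' HS HsumV.
set C := L / 5 * (2 * (N - 1) / (2 * N - 1)).
set F0 := Fv x.
have -> : Phi (x, al) = F0 + L / 5 * (/ N * S) by [].
move=> H; apply: Rle_trans H; apply: Req_le; ring.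
Qed.

End Step.
Arguments Q {d}.

Section Resample.
Variables (I A : finType) (i0 : I).

Definition upd (w : {ffun I -> A}) (q : A) : {ffun I -> A} :=
  [ffun k => if k == i0 then q else w k].

Definition swp (wp : {ffun I -> A} * A) : {ffun I -> A} * A :=
  (upd wp.1 wp.2, wp.1 i0).

Lemma swpK : cancel swp swp.
Proof.
move=> [w p]; rewrite /swp /=; congr pair.
  apply/ffunP => k; rewrite !ffunE; case: eqP => [->|//]; by [].
by rewrite ffunE eqxx.
Qed.

Lemma resample (H : {ffun I -> A} -> A -> R) :
  (forall w p q, H (upd w q) p = H w p) ->
  INR #|A| * rsum (fun w => H w (w i0)) = rsum (fun w => rsum (fun p => H w p)).
Proof.
move=> Hinv.
rewrite -(@rsum_pair _ _ (fun wp => H wp.1 wp.2)).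
have -> : rsum (fun wp : {ffun I -> A} * A => H wp.1 wp.2)
     = rsum (fun wp => H (swp wp).1 ((swp wp).1 i0)).
  apply: rsum_ext => -[w p] /=; rewrite Hinv ffunE eqxx //.
have -> : rsum (fun wp => H (swp wp).1 ((swp wp).1 i0)) = rsum (fun wp : {ffun I -> A} * A => H wp.1 (wp.1 i0)).
  by rewrite /rsum [RHS](reindex_inj (can_inj swpK)).
rewrite (@rsum_pair _ _ (fun wp => H wp.1 (wp.1 i0))) /=.
rewrite -rsum_scal; apply: rsum_ext => w; by rewrite rsum_const.
Qed.
End Resample.
Arguments upd {I A} i0 w q.
Arguments resample {I A} i0 H _.

Section Expect.
Variables (n d : nat) (L : R) (fs : 'I_n -> vec d -> R) (gs : 'I_n -> vec d -> vec d)
  (h : vec d -> option R) (prox : vec d -> vec d) (x0 : vec d) (h0 : R) (T : nat).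
Hypothesis Hn : (1 <= n)%N.
Hypothesis HL : 0 < L.
Hypothesis Hgrad : forall i, is_gradient (fs i) (gs i).
Hypothesis Hlip : forall i, lipschitz_grad L (gs i).
Hypothesis Hconv : convex_fun h.
Hypothesis Hprox : forall x, is_prox (/ (5 * L * INR n)) h x (prox x).
Hypothesis Hx0 : h x0 = Some h0.

Let eta := / (5 * L * INR n).
Let Ph := Phi n d L fs h.
Let step := saga_step gs prox eta.
Let init : saga_state n d := (x0, fun _ => x0).
Let A := ('I_n * 'I_n)%type.

Definition state (t : nat) (w : outcome n T) :=
  foldl step init (take t [seq w s | s <- enum 'I_T]).

Lemma eta_pos : 0 < eta.
Proof.
rewrite /eta; apply: Rinv_0_lt_compat; apply: Rmult_lt_0_compat; first lra.
apply: lt_0_INR; apply/ltP; exact: Hn.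
Qed.

Lemma dom_fold (l : seq A) : exists a, h (foldl step init l).1 = Some a.
Proof.
elim/last_ind: l => [|l p IH]; first by exists h0.
rewrite foldl_rcons; case: (foldl step init l) => x al /=.
case: p => i j /=.
by have [hp [Hp _]] := Hprox (vsub x (vscale eta (vadd (vsub (gs i x) (gs i (al i)))
                             (vavg (fun k => gs k (al k)))))); exists hp.
Qed.

Section AtT.
Variables (t : nat) (Ht : (t < T)%N).
Let i0 : 'I_T := Ordinal Ht.

Lemma take_upd (w : outcome n T) q :
  take t [seq (upd i0 w q) s | s <- enum 'I_T] = take t [seq w s | s <- enum 'I_T].
Proof.
rewrite -[LHS]map_take -[RHS]map_take; apply/eq_in_map => s Hs.
rewrite ffunE; case: eqP => // Hs0; exfalso.
have : val s \in map val (take t (enum 'I_T)) by apply: map_f.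
rewrite map_take val_enum_ord take_iota mem_iota Hs0 /= add0n.
by rewrite ltnNge geq_minl.
Qed.

Lemma state_upd w q : state t (upd i0 w q) = state t w.
Proof. by rewrite /state take_upd. Qed.

Lemma state_succ w : state t.+1 w = step (state t w) (w i0).
Proof.
rewrite /state (take_nth (w i0)); last by rewrite size_map size_enum_ord.
rewrite foldl_rcons; congr step.
rewrite (nth_map i0); last by rewrite size_enum_ord.
congr (w _); apply: val_inj; rewrite /= nth_enum_ord //.
Qed.

Lemma E_step :
  rsum (fun w : outcome n T => Ph (state t.+1 w))
  + eta / 2 * rsum (fun w : outcome n T => (norm (grad_map gs prox eta (state t w).1))^2)
  <= rsum (fun w : outcome n T => Ph (state t w)).
Proof.
set c := INR #|{: 'I_n * 'I_n}|.
have Hc : 0 < c.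
  rewrite /c card_prod card_ord; apply: lt_0_INR; apply/ltP; rewrite muln_gt0 Hn //.
have Hr := resample i0 (fun w p => Ph (step (state t w) p))
   (fun w p q => ltac:(by rewrite /= state_upd)).
have E1 : rsum (fun w : outcome n T => Ph (state t.+1 w))
        = rsum (fun w : outcome n T => Ph (step (state t w) (w i0))).
  by apply: rsum_ext => w; rewrite state_succ.
have Hos : forall w : outcome n T, rsum (fun p => Ph (step (state t w) p))
    <= c * (Ph (state t w) - eta / 2 * (norm (grad_map gs prox eta (state t w).1))^2).
  move=> w.
  have [a Ha] := dom_fold (take t [seq w s | s <- enum 'I_T]).
  rewrite -/(state t w) in Ha.
  move: Ha; case: (state t w) => x al /= Ha.
  have H := @one_step n d L fs gs h prox eta Hn HL Hgrad Hlip Hconv eta_pos Hprox erefl x al a Ha.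
  rewrite -/c in H.
  have Hci : c * / c = 1 by apply: Rinv_r; lra.
  have := Rmult_le_compat_l _ _ _ (Rlt_le _ _ Hc) H.
  rewrite -Rmult_assoc Hci Rmult_1_l; exact.
have H2 := @rsum_le _ _ _ Hos.
rewrite -Hr rsum_scal rsum_sub rsum_scal -E1 in H2.
have H3 : c * rsum (fun w : outcome n T => Ph (state t.+1 w))
   <= c * (rsum (fun w : outcome n T => Ph (state t w))
        - eta / 2 * rsum (fun w : outcome n T => (norm (grad_map gs prox eta (state t w).1))^2)).
  exact: H2.
have := Rmult_le_reg_l _ _ _ Hc H3. lra.
Qed.

End AtT.

Definition gsq (t : nat) := rsum (fun w : outcome n T => (norm (grad_map gs prox eta (state t w).1))^2).
Definition Esum (t : nat) := rsum (fun w : outcome n T => Ph (state t w)).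

Lemma telescope t : (t <= T)%N -> Esum t + eta / 2 * \big[Rplus/0]_(0 <= s < t) gsq s <= Esum 0.
Proof.
elim: t => [_|t IH Ht].
  rewrite big_mkord big_ord0; lra.
rewrite big_nat_recr //=.
have H1 := @E_step t Ht.
have H2 := IH (ltnW Ht).
rewrite /Esum /gsq in H2 *; lra.
Qed.

Lemma Esum0 : Esum 0 = INR #|{: outcome n T}| * @Fv n d fs h x0.
Proof.
rewrite /Esum -rsum_const; apply: rsum_ext => w.
rewrite /state take0 /= /Ph /Phi /=.
have -> : rsum (fun k : 'I_n => Q (vsub x0 x0)) = 0.
  rewrite -(rsum_zero 'I_n); apply: rsum_ext => k.
  rewrite /Q /dot -(rsum_zero 'I_d); apply: rsum_ext => i; rewrite /vsub; ring.
ring.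
Qed.

Variables (xs : vec d) (hs : R).
Hypothesis Hxs : forall y hy, h y = Some hy -> favg fs xs + hs <= favg fs y + hy.

Lemma EsumT t : INR #|{: outcome n T}| * (favg fs xs + hs) <= Esum t.
Proof.
rewrite /Esum -rsum_const; apply: rsum_le => w.
have [a Ha] := dom_fold (take t [seq w s | s <- enum 'I_T]).
rewrite -/(state t w) in Ha.
rewrite /Ph /Phi /Fv /hval Ha.
have := Hxs _ _ Ha.
have : 0 <= L / 5 * (/ INR n * rsum (fun k => Q (vsub (state t w).1 ((state t w).2 k)))).
  apply: Rmult_le_pos; first lra.
  apply: Rmult_le_pos; first by apply: Rlt_le; apply: Rinv_0_lt_compat; exact: INRn_pos.
  apply: rsum_ge0 => k; exact: Q_ge0.
lra.
Qed.

End Expect.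

Lemma arith_last (N L T NO SG D eta : R) : 1 <= N -> 0 < L -> 0 < T -> 0 < NO ->
  eta = / (5 * L * N) -> 0 <= D -> eta / 2 * SG <= NO * D ->
  / T * (/ NO * SG) <= 50 * L * N ^ 2 / (5 * N - 2) * D / T.
Proof.
move=> HN HL HT HNO He HD H.
have H1 : / NO * SG <= 10 * L * N * D.
  have E : SG = (eta / 2 * SG) * (10 * L * N) by rewrite He; field; lra.
  have Hc : 0 < 10 * L * N by nra.
  have H2 : SG <= NO * D * (10 * L * N).
    rewrite {1}E; apply: Rmult_le_compat_r; lra.
  have Hi : / NO * NO = 1 by apply: Rinv_l; lra.
  have Hip : 0 < / NO by apply: Rinv_0_lt_compat.
  have := Rmult_le_compat_l _ _ _ (Rlt_le _ _ Hip) H2.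
  have -> : / NO * (NO * D * (10 * L * N)) = 10 * L * N * D by field; lra.
  done.
have H3 : 10 * L * N * D <= 50 * L * N ^ 2 / (5 * N - 2) * D.
  have -> : 50 * L * N ^ 2 / (5 * N - 2) * D = 10 * L * N * D + 20 * L * N / (5 * N - 2) * D.
    field; lra.
  have : 0 <= 20 * L * N / (5 * N - 2) * D.
    apply: Rmult_le_pos => //; apply: Rmult_le_pos; first nra.
    apply: Rlt_le; apply: Rinv_0_lt_compat; lra.
  lra.
have HTi : 0 < / T by apply: Rinv_0_lt_compat.
rewrite /Rdiv (Rmult_comm _ (/ T)).
apply: Rmult_le_compat_l; lra.
Qed.

Theorem theorem3 (n d : nat) (L : R)
  (fs : 'I_n -> vec d -> R) (gs : 'I_n -> vec d -> vec d)
  (h : vec d -> option R) (prox : vec d -> vec d)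
  (xs : vec d) (hs : R) (x0 : vec d) (T : nat) :
  (1 <= n)%N -> (1 <= d)%N -> 0 < L ->
  (forall i, is_gradient (fs i) (gs i)) ->
  (forall i, lipschitz_grad L (gs i)) ->
  proper_fun h -> lsc_fun h -> convex_fun h -> closed_dom h ->
  h xs = Some hs ->
  (forall y hy, h y = Some hy -> favg fs xs + hs <= favg fs y + hy) ->
  (forall x, is_prox (/ (5 * L * INR n)) h x (prox x)) ->
  (1 <= T)%N ->
  forall h0, h x0 = Some h0 ->
    expected_gm_sq gs prox (/ (5 * L * INR n)) x0 T
    <= 50 * L * (INR n)^2 / (5 * INR n - 2)
       * ((favg fs x0 + h0) - (favg fs xs + hs)) / INR T.
Proof.
move=> Hn _ HL Hgrad Hlip _ _ Hconv _ _ Hopt Hprox HT h0 Hx0.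
have Htel := @telescope n d L fs gs h prox x0 h0 T Hn HL Hgrad Hlip Hconv Hprox Hx0 T (leqnn T).
rewrite Esum0 in Htel.
have HET := @EsumT n d L fs gs h prox x0 h0 T Hn HL Hprox Hx0 xs hs Hopt T.
have HF0 : Fv n d fs h x0 = favg fs x0 + h0 by rewrite /Fv /hval Hx0.
rewrite HF0 in Htel.
have HNO : 0 < INR #|{: outcome n T}|.
  apply: lt_0_INR; apply/ltP; rewrite card_ffun card_prod card_ord expn_gt0 muln_gt0 Hn //.
have HD : 0 <= favg fs x0 + h0 - (favg fs xs + hs) by have := Hopt _ _ Hx0; lra.
have HTp : 0 < INR T by apply: lt_0_INR; apply/ltP.
have E : expected_gm_sq gs prox (/ (5 * L * INR n)) x0 T
    = / INR T * (/ INR #|{: outcome n T}| *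
        \big[Rplus/0]_(0 <= s < T) gsq n d L gs prox x0 T s).
  rewrite /expected_gm_sq big_mkord rsum_scal. done.
rewrite E.
apply: (arith_last _ _ _ _ _ _ (/ (5 * L * INR n)) (@INRn_ge1 n Hn) HL HTp HNO erefl HD).
lra.
Qed.
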